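(* Let $(\gamma_i)_{i=0}^n$ be a linear sequence of geodesics in $\mathbb{H}^2$, and let $(x_i)_{i=0}^n$ be a homologous sequence of points on the $\gamma_i$. Then for every $y \in \gamma_n$, $$d(x_n, y) \le d(x_0, y).$$
   Context: A linear sequence of geodesics in $\mathbb{H}^2$ is a sequence $(\gamma_i)_{i=0}^n$ of pairwise disjoint geodesics, consecutive ones having a common orthogonal, such that each $\gamma_i$ separates those before it from those after it. Each $\gamma_i$ is oriented so that the geodesics following it in the sequence lie to its left ($\mathbb{H}^2$ being oriented). Let $\eta_i$ be the common orthogonal of $\gamma_i$ and $\gamma_{i+1}$. A homologous sequence of points is a sequence $x_i\in\gamma_i$ such that for each $i$, the signed distance (along $\gamma_{i+1}$, with its orientation) from the foot of $\eta_i$ on $\gamma_{i+1}$ to $x_{i+1}$ equals the signed distance (along $\gamma_i$, with its orientation) from the foot of $\eta_i$ on $\gamma_i$ to $x_i$; equivalently $x_{i+1}$ is the image of $x_i$ under the orientation-preserving isometry taking the oriented geodesic $\gamma_i$ to $\gamma_{i+1}$ and the foot of $\eta_i$ on $\gamma_i$ to its foot on $\gamma_{i+1}$. *)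

(* Defs.v *)
(* hyperboloid model of the hyperbolic plane H^2 in R^{2,1}. *)
From Stdlib Require Import Reals.
Open Scope R_scope.

Record V3 := mkV3 { v0 : R; v1 : R; v2 : R }.

Definition vadd (a b : V3) : V3 := mkV3 (v0 a + v0 b) (v1 a + v1 b) (v2 a + v2 b).
Definition vscale (k : R) (a : V3) : V3 := mkV3 (k * v0 a) (k * v1 a) (k * v2 a).

Definition mink (a b : V3) : R := - v0 a * v0 b + v1 a * v1 b + v2 a * v2 b.

Definition inH2 (x : V3) : Prop := mink x x = -1 /\ 0 < v0 x.

Definition arcosh (c : R) : R := ln (c + sqrt (c * c - 1)).

Definition hdist (x y : V3) : R := arcosh (- mink x y).

(* An oriented geodesic is given by a point p of H^2 and a unit tangent
   vector v at p (its direction).  Its unit-speed (arclength) parametrization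
   is t |-> cosh t p + sinh t v, oriented by increasing t. *)
Record ogeod := mkGeod { gp : V3; gv : V3 }.

Definition geod_ok (g : ogeod) : Prop :=
  inH2 (gp g) /\ mink (gv g) (gv g) = 1 /\ mink (gp g) (gv g) = 0.

Definition gpt (g : ogeod) (t : R) : V3 :=
  vadd (vscale (cosh t) (gp g)) (vscale (sinh t) (gv g)).

Definition gtan (g : ogeod) (t : R) : V3 :=
  vadd (vscale (sinh t) (gp g)) (vscale (cosh t) (gv g)).

Definition on_geod (g : ogeod) (x : V3) : Prop := exists t, x = gpt g t.

(* Orientation of H^2: a tangent frame (v, w) at p is positive iff
   det(p, v, w) > 0.  The positive unit normal to the oriented geodesic g
   (i.e. the unit tangent w at p with (gv g, w) a positive orthonormal frame)
   is J (p x v) with J = diag(-1,1,1) and x the euclidean cross product. *)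
Definition left_normal (g : ogeod) : V3 :=
  let p := gp g in let v := gv g in
  mkV3 (- (v1 p * v2 v - v2 p * v1 v))
       (v2 p * v0 v - v0 p * v2 v)
       (v0 p * v1 v - v1 p * v0 v).

Definition left_of (g : ogeod) (x : V3) : Prop := inH2 x /\ 0 < mink x (left_normal g).
Definition right_of (g : ogeod) (x : V3) : Prop := inH2 x /\ mink x (left_normal g) < 0.

Definition meets_orth (h g : ogeod) (a : R) : Prop :=
  exists s, gpt h s = gpt g a /\ mink (gtan h s) (gtan g a) = 0.

Definition common_orth_feet (g g' : ogeod) (a b : R) : Prop :=
  exists h, geod_ok h /\ meets_orth h g a /\ meets_orth h g' b.

(* (gamma_i)_{i=0..n} is a linear sequence of geodesics, each gamma_i being
   oriented so that the later ones lie to its left. *)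
Definition linear_seq (n : nat) (gam : nat -> ogeod) : Prop :=
  (forall i, (i <= n)%nat -> geod_ok (gam i)) /\
  (forall i j, (i <= n)%nat -> (j <= n)%nat -> i <> j ->
     forall x, on_geod (gam i) x -> ~ on_geod (gam j) x) /\
  (forall i, (i < n)%nat -> exists a b, common_orth_feet (gam i) (gam (S i)) a b) /\
  (forall i j, (j < i)%nat -> (i <= n)%nat ->
     forall x, on_geod (gam j) x -> right_of (gam i) x) /\
  (forall i k, (i < k)%nat -> (k <= n)%nat ->
     forall x, on_geod (gam k) x -> left_of (gam i) x).

(* Main.v *)
Require Import Defs.
From Stdlib Require Import Reals Lra Psatz Lia.
Open Scope R_scope.

Definition lnorm (p v : V3) : V3 :=
  mkV3 (- (v1 p * v2 v - v2 p * v1 v)) (v2 p * v0 v - v0 p * v2 v) (v0 p * v1 v - v1 p * v0 v).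

Ltac mk := unfold mink, vadd, vscale, lnorm; simpl; ring.

Lemma V3eq (a b : V3) : v0 a = v0 b -> v1 a = v1 b -> v2 a = v2 b -> a = b.
Proof. destruct a, b; simpl; intros; subst; reflexivity. Qed.

Lemma gram_id P V E :
  mink P P * (mink V V * mink E E - mink V E * mink V E)
  - mink P V * (mink P V * mink E E - mink V E * mink P E)
  + mink P E * (mink P V * mink V E - mink V V * mink P E)
  = - (mink (lnorm P V) E * mink (lnorm P V) E).
Proof. mk. Qed.

Lemma cramer0 P V E u :
  mink (lnorm P V) E * (- v0 u) =
  mink P u * (v1 V * v2 E - v2 V * v1 E) - v1 P * (mink V u * v2 E - v2 V * mink E u)
  + v2 P * (mink V u * v1 E - v1 V * mink E u).
Proof. mk. Qed.
Lemma cramer1 P V E u :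
  mink (lnorm P V) E * (v1 u) =
  v0 P * (mink V u * v2 E - v2 V * mink E u) - mink P u * (v0 V * v2 E - v2 V * v0 E)
  + v2 P * (v0 V * mink E u - mink V u * v0 E).
Proof. mk. Qed.
Lemma cramer2 P V E u :
  mink (lnorm P V) E * (v2 u) =
  v0 P * (v1 V * mink E u - mink V u * v1 E) - v1 P * (v0 V * mink E u - mink V u * v0 E)
  + mink P u * (v0 V * v1 E - v1 V * v0 E).
Proof. mk. Qed.

Lemma D2 P V E : mink P P = -1 -> mink V V = 1 -> mink E E = 1 -> mink P V = 0 ->
  mink P E = 0 -> mink V E = 0 -> mink (lnorm P V) E * mink (lnorm P V) E = 1.
Proof.
  intros H1 H2 H3 H4 H5 H6. pose proof (gram_id P V E) as G.
  rewrite H1, H2, H3, H4, H5, H6 in G. lra.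
Qed.

Lemma orth_zero P V E u : mink (lnorm P V) E * mink (lnorm P V) E = 1 ->
  mink P u = 0 -> mink V u = 0 -> mink E u = 0 -> v0 u = 0 /\ v1 u = 0 /\ v2 u = 0.
Proof.
  intros HD h1 h2 h3.
  pose proof (cramer0 P V E u) as C0. pose proof (cramer1 P V E u) as C1.
  pose proof (cramer2 P V E u) as C2.
  rewrite h1, h2, h3 in C0, C1, C2.
  set (D := mink (lnorm P V) E) in *.
  split; [|split].
  - replace (v0 u) with (D * D * v0 u) by (rewrite HD; ring).
    replace (D * D * v0 u) with (- D * (D * - v0 u)) by ring. rewrite C0; ring.
  - replace (v1 u) with (D * D * v1 u) by (rewrite HD; ring).
    replace (D * D * v1 u) with (D * (D * v1 u)) by ring. rewrite C1; ring.
  - replace (v2 u) with (D * D * v2 u) by (rewrite HD; ring).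
    replace (D * D * v2 u) with (D * (D * v2 u)) by ring. rewrite C2; ring.
Qed.

Lemma mink_sym a b : mink a b = mink b a.
Proof. mk. Qed.

Lemma expand P V E w : mink P P = -1 -> mink V V = 1 -> mink E E = 1 -> mink P V = 0 ->
  mink P E = 0 -> mink V E = 0 ->
  w = vadd (vadd (vscale (- mink w P) P) (vscale (mink w V) V)) (vscale (mink w E) E).
Proof.
  intros H1 H2 H3 H4 H5 H6.
  set (u := vadd w (vscale (-1) (vadd (vadd (vscale (- mink w P) P) (vscale (mink w V) V)) (vscale (mink w E) E)))).
  assert (HP : mink P u = 0).
  { transitivity (mink P w + mink w P * mink P P - mink w V * mink P V - mink w E * mink P E).
    unfold u; mk. rewrite H1, H4, H5, (mink_sym P w). ring. }
  assert (HV : mink V u = 0).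
  { transitivity (mink V w + mink w P * mink P V - mink w V * mink V V - mink w E * mink V E).
    unfold u; mk. rewrite H2, H4, H6, (mink_sym V w). ring. }
  assert (HE : mink E u = 0).
  { transitivity (mink E w + mink w P * mink P E - mink w V * mink V E - mink w E * mink E E).
    unfold u; mk. rewrite H3, H5, H6, (mink_sym E w). ring. }
  destruct (orth_zero P V E u (D2 P V E H1 H2 H3 H4 H5 H6) HP HV HE) as [a [b c]].
  unfold u in a, b, c; simpl in a, b, c.
  apply V3eq; simpl; lra.
Qed.

Lemma ch_sh t : cosh t * cosh t - sinh t * sinh t = 1.
Proof.
  unfold cosh, sinh. rewrite exp_Ropp. assert (exp t <> 0) by (apply Rgt_not_eq; apply exp_pos). field; auto.
Qed.
Lemma cosh_add x y : cosh (x+y) = cosh x * cosh y + sinh x * sinh y.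
Proof.
  unfold cosh, sinh. rewrite !exp_Ropp, exp_plus.
  assert (exp x <> 0) by (apply Rgt_not_eq; apply exp_pos).
  assert (exp y <> 0) by (apply Rgt_not_eq; apply exp_pos). field; auto.
Qed.
Lemma sinh_add x y : sinh (x+y) = sinh x * cosh y + cosh x * sinh y.
Proof.
  unfold cosh, sinh. rewrite !exp_Ropp, exp_plus.
  assert (exp x <> 0) by (apply Rgt_not_eq; apply exp_pos).
  assert (exp y <> 0) by (apply Rgt_not_eq; apply exp_pos). field; auto.
Qed.
Lemma cosh_ge1 t : 1 <= cosh t.
Proof.
  unfold cosh. rewrite exp_Ropp. pose proof (exp_pos t) as H.
  set (e := exp t) in *.
  assert (e + / e - 2 = (e - 1) * (e - 1) / e) by (field; apply Rgt_not_eq; lra).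
  assert (0 <= (e - 1) * (e - 1) / e).
  { apply Rmult_le_pos. apply Rle_0_sqr. left; apply Rinv_0_lt_compat; lra. }
  lra.
Qed.

Lemma core P V E V' y c s ch sh :
 mink P P = -1 -> mink V V = 1 -> mink E E = 1 -> mink P V = 0 -> mink P E = 0 -> mink V E = 0 ->
 c*c - s*s = 1 -> 1 <= c -> 0 < ch ->
 mink V' V' = 1 -> mink (vadd (vscale c P) (vscale s E)) V' = 0 ->
 mink (vadd (vscale s P) (vscale c E)) V' = 0 ->
 0 < mink (vadd (vscale c P) (vscale s E)) (lnorm P V) ->
 mink P (lnorm (vadd (vscale c P) (vscale s E)) V') < 0 ->
 0 <= mink y (lnorm (vadd (vscale c P) (vscale s E)) V') ->
 mink P y <= 0 ->
 - mink (vadd (vscale ch (vadd (vscale c P) (vscale s E))) (vscale sh V')) y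
   <= - mink (vadd (vscale ch P) (vscale sh V)) y.
Proof.
  intros H1 H2 H3 H4 H5 H6 Hcs Hc Hch HV'1 HV'2 HV'3 O1 O2 Hy HPy.
  pose proof (expand P V E V' H1 H2 H3 H4 H5 H6) as EV.
  set (al := mink V' P) in *. set (be := mink V' V) in *. set (ga := mink V' E) in *.
  assert (A1 : c * al + s * ga = 0).
  { rewrite <- HV'2. unfold al, ga. rewrite !(mink_sym V'). mk. }
  assert (A2 : s * al + c * ga = 0).
  { rewrite <- HV'3. unfold al, ga. rewrite !(mink_sym V'). mk. }
  assert (Hal : al = 0).
  { replace al with ((c*c - s*s) * al) by (rewrite Hcs; ring).
    replace ((c*c - s*s) * al) with (c * (c*al + s*ga) - s * (s*al + c*ga)) by ring.
    rewrite A1, A2; ring. }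
  assert (Hga : ga = 0).
  { replace ga with ((c*c - s*s) * ga) by (rewrite Hcs; ring).
    replace ((c*c - s*s) * ga) with (c * (s*al + c*ga) - s * (c*al + s*ga)) by ring.
    rewrite A1, A2; ring. }
  rewrite Hal, Hga in EV. clearbody al be ga.
  set (D := mink (lnorm P V) E) in *.
  assert (Hbe : be * be = 1).
  { rewrite <- HV'1, EV. transitivity (be*be*mink V V). rewrite H2; ring.
    mk. }
  assert (O1' : s * D > 0).
  { replace (s*D) with (mink (vadd (vscale c P) (vscale s E)) (lnorm P V)).
    lra. unfold D. mk. }
  assert (O2' : be * s * D > 0).
  { rewrite EV in O2.
    replace (be*s*D) with (- mink P (lnorm (vadd (vscale c P) (vscale s E))
          (vadd (vadd (vscale (- 0) P) (vscale be V)) (vscale 0 E)))).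
    lra. unfold D. mk. }
  assert (Hb1 : be = 1).
  { assert (be > 0).
    { destruct (Rtotal_order be 0) as [h|[h|h]]; [|subst; lra|lra].
      nra. }
    nra. }
  pose proof (expand P V E y H1 H2 H3 H4 H5 H6) as EY.
  set (y0 := - mink y P) in *. set (yv := mink y V) in *. set (y1 := mink y E) in *.
  assert (Hy' : 0 <= D * (c * y1 - s * y0)).
  { replace (D * (c * y1 - s * y0)) with
      (mink (vadd (vadd (vscale y0 P) (vscale yv V)) (vscale y1 E))
         (lnorm (vadd (vscale c P) (vscale s E))
          (vadd (vadd (vscale (- 0) P) (vscale be V)) (vscale 0 E)))).
    rewrite <- EY, <- EV. exact Hy.
    rewrite Hb1. unfold D. mk. }
  assert (Hy0 : 0 <= y0). { unfold y0. rewrite mink_sym. lra. }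
  assert (K : 0 <= s * (c * y1 - s * y0)).
  { assert (0 <= (s*D) * (D * (c*y1 - s*y0))) by (apply Rmult_le_pos; lra).
    assert (D*D > 0) by nra. nra. }
  assert (K2 : s * y1 >= (c - 1) * y0) by nra.
  assert (G : - mink (vadd (vscale ch (vadd (vscale c P) (vscale s E))) (vscale sh V')) y
     + mink (vadd (vscale ch P) (vscale sh V)) y = - ch * ((c-1) * (- y0) + s * y1)).
  { unfold y0, y1. rewrite EV at 1. rewrite Hb1. 
    rewrite (mink_sym y P), (mink_sym y E).
    mk. }
  nra.
Qed.

Lemma gpt_shift g u t : gpt g (u+t) = vadd (vscale (cosh t) (gpt g u)) (vscale (sinh t) (gtan g u)).
Proof. apply V3eq; unfold gpt, gtan, vadd, vscale; simpl; rewrite cosh_add, sinh_add; ring. Qed.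
Lemma gtan_shift g u t : gtan g (u+t) = vadd (vscale (sinh t) (gpt g u)) (vscale (cosh t) (gtan g u)).
Proof. apply V3eq; unfold gpt, gtan, vadd, vscale; simpl; rewrite cosh_add, sinh_add; ring. Qed.

Lemma geod_norms g u : geod_ok g ->
  mink (gpt g u) (gpt g u) = -1 /\ mink (gtan g u) (gtan g u) = 1 /\ mink (gpt g u) (gtan g u) = 0.
Proof.
  destruct g as [p v]. intros [[Hp _] [Hv Hpv]]. simpl in *.
  pose proof (ch_sh u) as K.
  split; [|split].
  - transitivity (cosh u * cosh u * mink p p + 2 * cosh u * sinh u * mink p v + sinh u * sinh u * mink v v).
    unfold gpt; simpl; mk. rewrite Hp, Hv, Hpv. lra.
  - transitivity (sinh u * sinh u * mink p p + 2 * cosh u * sinh u * mink p v + cosh u * cosh u * mink v v).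
    unfold gtan; simpl; mk. rewrite Hp, Hv, Hpv. lra.
  - transitivity (cosh u * sinh u * (mink p p + mink v v) + (cosh u * cosh u + sinh u * sinh u) * mink p v).
    unfold gpt, gtan; simpl; mk. rewrite Hp, Hv, Hpv. lra.
Qed.

Lemma lnorm_shift g u : lnorm (gpt g u) (gtan g u) = left_normal g.
Proof.
  pose proof (ch_sh u) as K.
  apply V3eq; unfold lnorm, left_normal, gpt, gtan, vadd, vscale; simpl;
  match goal with |- ?l = ?r => transitivity ((cosh u * cosh u - sinh u * sinh u) * r);
    [ring | rewrite K; ring] end.
Qed.

Lemma on_geod_orth g y : on_geod g y -> mink y (left_normal g) = 0.
Proof. intros [t ->]. unfold left_normal, gpt. mk. Qed.


Lemma sq_nonneg x : 0 <= x*x.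
Proof. apply Rle_0_sqr. Qed.

Lemma sq_lt_pos a b : 0 < a -> b*b < a*a -> 0 < a + b.
Proof.
  intros Ha Hb. destruct (Rle_or_lt (a+b) 0) as [h|h]; [|exact h].
  exfalso. assert (0 < a - b) by lra.
  assert (0 <= (-(a+b))*(a-b)) by (apply Rmult_le_pos; lra).
  nra.
Qed.

Lemma sq_le a b : 0 <= a -> b*b <= a*a -> b <= a.
Proof.
  intros Ha Hb. destruct (Rle_or_lt b a) as [h|h]; [exact h|].
  exfalso. assert (0 < b + a) by lra. assert (0 < b - a) by lra.
  assert (0 < (b+a)*(b-a)) by (apply Rmult_lt_0_compat; lra).
  nra.
Qed.

Lemma ge1 p : 0 < p -> 1 <= p*p -> 1 <= p.
Proof.
  intros H1 H2. destruct (Rle_or_lt 1 p) as [h|h]; [exact h|].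
  exfalso. assert (p*p < 1*1).
  { apply Rmult_le_0_lt_compat; lra. }
  lra.
Qed.

Lemma cs2 a b c d : (a*c+b*d)*(a*c+b*d) <= (a*a+b*b)*(c*c+d*d).
Proof. pose proof (sq_nonneg (a*d - b*c)). nra. Qed.

Lemma geod_H2 g u : geod_ok g -> inH2 (gpt g u).
Proof.
  intro Hg. destruct (geod_norms g u Hg) as [N _]. split; [exact N|].
  destruct g as [p v]. destruct Hg as [[Hp Hp0] [Hv Hpv]]. simpl in *.
  unfold gpt; simpl.
  pose proof (ch_sh u) as K. pose proof (cosh_ge1 u) as C.
  set (c := cosh u) in *. set (s := sinh u) in *.
  destruct p as [p0 p1 p2]; destruct v as [w0 w1 w2]; unfold mink in *; simpl in *.
  pose proof (cs2 p1 p2 w1 w2) as CS.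
  replace (p1*w1 + p2*w2) with (p0*w0) in CS by lra.
  replace (p1*p1 + p2*p2) with (p0*p0-1) in CS by lra.
  replace (w1*w1 + w2*w2) with (1+w0*w0) in CS by lra.
  assert (W : w0 * w0 <= p0 * p0 - 1) by lra.
  pose proof (sq_nonneg w0).
  assert (c*c >= 1) by nra.
  assert (s*s*(w0*w0) <= s*s*(p0*p0-1)).
  { apply Rmult_le_compat_l; [apply sq_nonneg|lra]. }
  replace (s*s) with (c*c-1) in H1 by lra.
  assert (S2 : (s*w0) * (s*w0) < (c*p0) * (c*p0)).
  { replace ((s*w0)*(s*w0)) with (s*s*(w0*w0)) by ring.
    replace (s*s) with (c*c-1) by lra. nra. }
  apply sq_lt_pos; [apply Rmult_lt_0_compat; lra|exact S2].
Qed.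

Lemma revCS P y : inH2 P -> inH2 y -> mink P y <= -1.
Proof.
  destruct P as [p0 p1 p2]; destruct y as [y0 y1 y2].
  intros [HP HP0] [HY HY0]. unfold mink in *; simpl in *.
  pose proof (cs2 p1 p2 y1 y2) as CS.
  replace (p1*p1 + p2*p2) with (p0*p0-1) in CS by lra.
  replace (y1*y1 + y2*y2) with (y0*y0-1) in CS by lra.
  assert (P1 : 1 <= p0) by (apply ge1; [lra| pose proof (sq_nonneg p1); pose proof (sq_nonneg p2); lra]).
  assert (Y1 : 1 <= y0) by (apply ge1; [lra| pose proof (sq_nonneg y1); pose proof (sq_nonneg y2); lra]).
  pose proof (sq_nonneg (p0 - y0)).
  assert (Q : (p1*y1 + p2*y2) * (p1*y1 + p2*y2) <= (p0*y0 - 1) * (p0*y0 - 1)) by nra.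
  assert (0 <= p0*y0 - 1) by nra.
  pose proof (sq_le _ _ H0 Q). lra.
Qed.

Lemma step g g' h a b t y :
 geod_ok g -> geod_ok g' -> geod_ok h -> meets_orth h g a -> meets_orth h g' b ->
 left_of g (gpt g' b) -> right_of g' (gpt g a) ->
 0 <= mink y (left_normal g') -> inH2 y ->
 - mink (gpt g' (b+t)) y <= - mink (gpt g (a+t)) y.
Proof.
  intros Hg Hg' Hh [s [Hs1 Hs2]] [s' [Hs1' Hs2']] HL HR Hy HyH.
  set (c := cosh (s'-s)). set (sn := sinh (s'-s)).
  assert (EP' : gpt g' b = vadd (vscale c (gpt g a)) (vscale sn (gtan h s))).
  { rewrite <- Hs1', <- Hs1. replace s' with (s + (s'-s)) at 1 by ring. apply gpt_shift. }
  assert (EE' : gtan h s' = vadd (vscale sn (gpt g a)) (vscale c (gtan h s))).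
  { rewrite <- Hs1. replace s' with (s + (s'-s)) at 1 by ring. apply gtan_shift. }
  destruct (geod_norms g a Hg) as [N1 [N2 N3]].
  destruct (geod_norms h s Hh) as [M1 [M2 M3]].
  destruct (geod_norms g' b Hg') as [K1 [K2 K3]].
  assert (PH : inH2 (gpt g a)) by (apply geod_H2; exact Hg).
  pose proof (revCS _ _ PH HyH) as RC.
  rewrite (gpt_shift g' b t), (gpt_shift g a t).
  destruct HR as [_ HR].
  rewrite <- (lnorm_shift g' b) in Hy, HR.
  destruct HL as [_ HL]; rewrite <- (lnorm_shift g a) in HL.
  rewrite EE' in Hs2'.
  rewrite EP' in HR, Hy, HL, K3 |- *.
  rewrite Hs1 in M3.
  apply (core (gpt g a) (gtan g a) (gtan h s) (gtan g' b) y c sn (cosh t) (sinh t));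
    auto; try lra.
  - rewrite mink_sym; exact Hs2.
  - apply ch_sh.
  - apply cosh_ge1.
  - pose proof (cosh_ge1 t); lra.
Qed.

Lemma arcosh_mono c1 c2 : 1 <= c1 -> c1 <= c2 -> arcosh c1 <= arcosh c2.
Proof.
  intros H1 H2. unfold arcosh.
  assert (sqrt (c1*c1-1) <= sqrt (c2*c2-1)) by (apply sqrt_le_1_alt; nra).
  pose proof (sqrt_pos (c1*c1-1)).
  destruct (Req_dec (c1 + sqrt (c1*c1-1)) (c2 + sqrt (c2*c2-1))) as [e|e].
  - rewrite e; lra.
  - left. apply ln_increasing; lra.
Qed.

Theorem lemmaA11 (n : nat) (gam : nat -> ogeod) (x : nat -> V3)
  (a b : nat -> R) (y : V3) :
  linear_seq n gam ->
  (forall i, (i < n)%nat -> common_orth_feet (gam i) (gam (S i)) (a i) (b i)) ->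
  (forall i, (i <= n)%nat -> on_geod (gam i) (x i)) ->
  (forall i, (i < n)%nat -> exists t,
       x i = gpt (gam i) (a i + t) /\ x (S i) = gpt (gam (S i)) (b i + t)) ->
  on_geod (gam n) y ->
  hdist (x n) y <= hdist (x O) y.
Proof.
  intros [Hok [_ [_ [Hright Hleft]]]] Hfeet Hon Hhom Hy.
  assert (HyH : inH2 y).
  { destruct Hy as [u ->]. apply geod_H2, Hok; lia. }
  assert (Claim : forall k, (k <= n)%nat -> - mink (x k) y <= - mink (x O) y).
  { induction k as [|k IH]; intro Hk; [lra|].
    assert (Hkn : (k < n)%nat) by lia.
    specialize (IH ltac:(lia)).
    destruct (Hhom k Hkn) as [t [Hx1 Hx2]].
    destruct (Hfeet k Hkn) as [h [Hh [Hm1 Hm2]]].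
    assert (St : - mink (x (S k)) y <= - mink (x k) y).
    { rewrite Hx1, Hx2. apply (step (gam k) (gam (S k)) h).
      - apply Hok; lia.
      - apply Hok; lia.
      - exact Hh.
      - exact Hm1.
      - exact Hm2.
      - apply (Hleft k (S k)); [lia|lia|]. exists (b k); reflexivity.
      - apply (Hright (S k) k); [lia|lia|]. exists (a k); reflexivity.
      - destruct (Nat.eq_dec (S k) n) as [e|e].
        + rewrite e, (on_geod_orth _ _ Hy); lra.
        + destruct (Hleft (S k) n ltac:(lia) ltac:(lia) y Hy) as [_ HL].
          lra.
      - exact HyH. }
    lra. }
  unfold hdist. apply arcosh_mono.
  - assert (inH2 (x n)).
    { destruct (Hon n ltac:(lia)) as [u ->]. apply geod_H2, Hok; lia. }
    pose proof (revCS _ _ H HyH). lra.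
  - apply Claim; lia.
Qed.
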